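(* Let $\lambda\in(0,1)$ be fixed and let $\omega\sim\mathcal G(n,p)$ with $p=\lambda/n$. There exists $c=c(\lambda)>0$ such that for every $\rho>0$ there exists $M_0=M_0(\lambda,\rho)$ such that for every $M\geq M_0$ there is $C=C(\lambda,\rho,M)$ with \[\mathbb P\big(|S_M(\omega)|\geq \rho n\big)\leq C e^{-c\rho n}\quad\text{for all } n.\]
   Context: $\mathcal G(n,p)$ is the Erdős–Rényi random graph on vertex set $\{1,\dots,n\}$. For a graph $\omega$ and vertex $x$, $\mathcal C_x$ denotes the connected component (cluster) of $x$, and $S_M(\omega)=\{x:|\mathcal C_x|>M\}$ is the set of vertices in clusters of size larger than $M$. *)

(* Defs.v *)
From Stdlib Require Import Reals.
From mathcomp Require Import all_boot.
Set Implicit Arguments. Unset Strict Implicit. Unset Printing Implicit Defensive.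

Definition pairs (n : nat) : {set 'I_n * 'I_n} := [set u : 'I_n * 'I_n | (val u.1 < val u.2)%N].

(* A graph omega on vertex set 'I_n is a subset E of [pairs n] (its edge set);
   the sample space of G(n,p) is [powerset (pairs n)]. *)
Definition adj (n : nat) (E : {set 'I_n * 'I_n}) : rel 'I_n :=
  fun x y => ((x, y) \in E) || ((y, x) \in E).

Definition cluster (n : nat) (E : {set 'I_n * 'I_n}) (x : 'I_n) : {set 'I_n} :=
  [set y | connect (adj E) x y].

Definition S_M (n M : nat) (E : {set 'I_n * 'I_n}) : {set 'I_n} :=
  [set x | (M < #|cluster E x|)%N].

Definition ER_weight (n : nat) (p : R) (E : {set 'I_n * 'I_n}) : R :=
  Rmult (pow p #|E|) (pow (Rminus 1 p) (#|pairs n| - #|E|)).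

Definition ER_prob (n : nat) (p : R) (A : pred {set 'I_n * 'I_n}) : R :=
  \big[Rplus/R0]_(E in powerset (pairs n) | A E) ER_weight p E.

Definition Rleb (a b : R) : bool := if Rle_dec a b then true else false.

(* Main.v *)
From HB Require Import structures.
From Stdlib Require Import Reals Lra.
Require Import Defs.
From mathcomp Require Import all_boot zify.
Local Open Scope R_scope.
Lemma RplusA' : associative Rplus. Proof. move=> *; by rewrite Rplus_assoc. Qed.
Lemma RmultA' : associative Rmult. Proof. move=> *; by rewrite Rmult_assoc. Qed.
HB.instance Definition _ := Monoid.isComLaw.Build R R0 Rplus RplusA' Rplus_comm Rplus_0_l.
HB.instance Definition _ := Monoid.isComLaw.Build R R1 Rmult RmultA' Rmult_comm Rmult_1_l.
HB.instance Definition _ := Monoid.isMulLaw.Build R R0 Rmult Rmult_0_l Rmult_0_r.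
HB.instance Definition _ := Monoid.isAddLaw.Build R Rmult Rplus Rmult_plus_distr_r Rmult_plus_distr_l.

Lemma sumR_le (I : finType) (P : pred I) (F G : I -> R) :
  (forall i, P i -> F i <= G i) ->
  \big[Rplus/R0]_(i | P i) F i <= \big[Rplus/R0]_(i | P i) G i.
Proof.
move=> H; apply: (big_ind2 (fun a b => a <= b)) => //; first lra.
by move=> *; apply: Rplus_le_compat.
Qed.

Lemma sumR_ge0 (I : finType) (P : pred I) (F : I -> R) :
  (forall i, P i -> 0 <= F i) -> 0 <= \big[Rplus/R0]_(i | P i) F i.
Proof.
move=> H; apply: (big_ind (fun a => 0 <= a)) => //; first lra.
by move=> *; apply: Rplus_le_le_0_compat.
Qed.

Lemma sumR_sub (I : finType) (P Q : pred I) (F : I -> R) :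
  (forall i, P i -> 0 <= F i) ->
  \big[Rplus/R0]_(i | P i && Q i) F i <= \big[Rplus/R0]_(i | P i) F i.
Proof.
move=> H; rewrite big_mkcondr /=.
apply: sumR_le => i Pi; case: (Q i); [lra | exact: H].
Qed.

Lemma sumR_mull (I : finType) (P : pred I) (c : R) (F : I -> R) :
  c * \big[Rplus/R0]_(i | P i) F i = \big[Rplus/R0]_(i | P i) (c * F i).
Proof. exact: big_distrr. Qed.

Lemma closure_connect (T : finType) (e : rel T) (A : {set T}) x y :
  x \in A -> (forall a b, a \in A -> e a b -> b \in A) -> connect e x y -> y \in A.
Proof.
move=> xA cl /connectP [q pth ->]; elim: q x xA pth => //= b q IH x xA /andP [exb pth].
exact: (IH b (cl _ _ xA exb) pth).
Qed.
Arguments closure_connect {T e A x y}.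

Lemma sum_powersetU (T : finType) (A B : {set T}) (f : {set T} -> R) :
  [disjoint A & B] ->
  \big[Rplus/R0]_(E in powerset (A :|: B)) f E =
  \big[Rplus/R0]_(E1 in powerset A) \big[Rplus/R0]_(E2 in powerset B) f (E1 :|: E2).
Proof.
move=> dAB.
rewrite pair_big_dep /=.
pose h := fun q : {set T} * {set T} => q.1 :|: q.2.
pose D := [pred q : {set T} * {set T} | (q.1 \in powerset A) && (q.2 \in powerset B)].
have -> : powerset (A :|: B) = [set h q | q in D].
  apply/setP => E; apply/idP/imsetP.
  - rewrite powersetE => sE; exists (E :&: A, E :&: B).
      by apply/andP; rewrite /= !powersetE !subsetIr.
    by rewrite /h /= -setIUr; apply/esym/setIidPl.
  - move=> [[E1 E2]] /andP /= [s1 s2] ->.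
    by rewrite !powersetE in s1 s2; rewrite powersetE /h /=; exact: setUSS.
rewrite (big_imset (fun E => f E)) //=.
move=> [E1 E2] [F1 F2] /andP /= [s1 s2] /andP /= [t1 t2]; rewrite /h /= => eq.
rewrite !powersetE in s1 s2 t1 t2.
have dA : forall X Y : {set T}, X \subset A -> Y \subset B -> (X :|: Y) :&: A = X.
  move=> X Y sX sY; rewrite setIUl (setIidPl sX).
  have -> : Y :&: A = set0.
    apply/setP => y; rewrite !inE; apply/negbTE; apply/andP => [[yY yA]].
    by move: dAB => /disjoint_setI0 /setP /(_ y); rewrite !inE yA (subsetP sY _ yY).
  by rewrite setU0.
have dB : forall X Y : {set T}, X \subset A -> Y \subset B -> (X :|: Y) :&: B = Y.
  move=> X Y sX sY; rewrite setIUl (setIidPl sY).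
  have -> : X :&: B = set0.
    apply/setP => y; rewrite !inE; apply/negbTE; apply/andP => [[yX yB]].
    by move: dAB => /disjoint_setI0 /setP /(_ y); rewrite !inE yB (subsetP sX _ yX).
  by rewrite set0U.
have e1 : E1 = F1 by rewrite -(dA E1 E2) // eq dA.
have e2 : E2 = F2 by rewrite -(dB E1 E2) // eq dB.
by rewrite e1 e2.
Qed.

Lemma sum_binom (T : finType) (B : {set T}) (a b : R) :
  \big[Rplus/R0]_(F in powerset B) (a ^ #|F| * b ^ (#|B| - #|F|)) = (a + b) ^ #|B|.
Proof.
move Hk: #|B| => k; elim: k B Hk => [|k IH] B Hk.
  move/eqP: Hk; rewrite cards_eq0 => /eqP ->; rewrite powerset0 big_set1 cards0 /=; lra.
have [x xB] : exists x, x \in B.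
  by apply/set0Pn; rewrite -card_gt0 Hk.
have eB : B = [set x] :|: (B :\ x) by rewrite setD1K.
have kB : #|B :\ x| = k by move: Hk; rewrite (cardsD1 x B) xB; case.
rewrite {1}eB sum_powersetU; last first.
  by rewrite disjoint_sym disjoints_subset setDE subsetIr.
rewrite powerset1 big_setU1 /=; last first.
  by rewrite inE; apply/eqP => /setP /(_ x); rewrite !inE eqxx.
rewrite big_set1.
have E1 : forall F, F \in powerset (B :\ x) -> x \notin F.
  by move=> F; rewrite powersetE => sF; apply/negP => /(subsetP sF); rewrite !inE eqxx.
have E2 : forall F, F \in powerset (B :\ x) -> (#|F| <= k)%N.
  by move=> F; rewrite powersetE => /subset_leq_card; rewrite kB.
have -> : \big[Rplus/R0]_(E in powerset (B :\ x)) (a ^ #|set0 :|: E| * b ^ (k.+1 - #|set0 :|: E|)) = b * \big[Rplus/R0]_(E in powerset (B :\ x)) (a ^ #|E| * b ^ (k - #|E|)).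
  rewrite sumR_mull; apply: eq_bigr => F HF; rewrite set0U.
  have -> : (k.+1 - #|F| = (k - #|F|).+1)%N by have := E2 F HF; lia.
  simpl; ring.
have -> : \big[Rplus/R0]_(E in powerset (B :\ x)) (a ^ #|x |: E| * b ^ (k.+1 - #|x |: E|)) = a * \big[Rplus/R0]_(E in powerset (B :\ x)) (a ^ #|E| * b ^ (k - #|E|)).
  rewrite sumR_mull; apply: eq_bigr => F HF; rewrite cardsU1 E1 //.
  have -> : (k.+1 - (1 + #|F|) = (k - #|F|))%N by lia.
  have -> : (true + #|F| = #|F|.+1)%N by []. rewrite /=; ring.
rewrite IH //; ring.
Qed.

Section Graph.
Variable n : nat.
Implicit Types (V S : {set 'I_n}) (E F : {set 'I_n * 'I_n}) (u : 'I_n).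

Definition pV V : {set 'I_n * 'I_n} := [set e in pairs n | (e.1 \in V) && (e.2 \in V)].
Definition wt (p : R) V E : R := p ^ #|E| * (1 - p) ^ (#|pV V| - #|E|).
Definition clus E S : {set 'I_n} := [set y | [exists x in S, connect (adj E) x y]].
Definition star u V := [set e in pV V | (e.1 == u) || (e.2 == u)].
Definition nbr u F := [set v | ((u, v) \in F) || ((v, u) \in F)].

Lemma pairs_neq e : e \in pairs n -> e.1 != e.2.
Proof. by rewrite inE => lt; apply/eqP => eq; move: lt; rewrite eq ltnn. Qed.

Lemma pV_split u V : u \in V -> pV V = pV (V :\ u) :|: star u V.
Proof.
move=> uV; apply/setP => e; rewrite !inE.
case: (e.1 =P u) => [->|/eqP ne1]; case: (e.2 =P u) => [->|/eqP ne2];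
  rewrite ?eqxx ?uV /= ?andbF ?andbT ?orbT ?orbF //=.
Qed.

Lemma pV_star_disj u V : [disjoint pV (V :\ u) & star u V].
Proof.
rewrite -setI_eq0; apply/eqP/setP => e; rewrite !inE.
by case: (e.1 =P u) => [->|_]; case: (e.2 =P u) => [->|_]; rewrite ?eqxx /= ?andbF.
Qed.

Lemma star_card u V : (#|star u V| <= n)%N.
Proof.
pose g := fun e : 'I_n * 'I_n => if e.1 == u then e.2 else e.1.
rewrite -(card_in_imset (f := g)); first by rewrite -[X in (_ <= X)%N]card_ord max_card.
move=> [a b] [c d]; rewrite !inE /g /= => /andP [/andP [ab _] /orP o1] /andP [/andP [cd _] /orP o2].
case: o1 => /eqP e1; case: o2 => /eqP e2; subst => //=; rewrite ?eqxx.
- by move=> ->.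
- case: (c =P u) => [cu|_] bc.
    by rewrite bc ltnn in ab.
  by rewrite bc in ab; move: (ltn_trans ab cd); rewrite ltnn.
- case: (a =P u) => [au|_] ad.
    by rewrite -ad ltnn in cd.
  by rewrite ad in ab; move: (ltn_trans ab cd); rewrite ltnn.
- case: (a =P u) => [au|_]; first by rewrite au ltnn in ab.
  case: (c =P u) => [cu|_]; first by rewrite cu ltnn in cd.
  by move=> ->.
Qed.

Lemma nbr_card u V F : F \subset star u V -> (#|nbr u F| <= #|F|)%N.
Proof.
move=> sF.
pose g := fun e : 'I_n * 'I_n => if e.1 == u then e.2 else e.1.
apply: (leq_trans _ (leq_imset_card g F)); apply: subset_leq_card.
apply/subsetP => v; rewrite inE => /orP [uv|vu]; apply/imsetP.
  by exists (u, v) => //; rewrite /g /= eqxx.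
exists (v, u) => //; rewrite /g /=.
have := subsetP sF _ vu; rewrite !inE => /andP [/andP [lt _] _].
by case: (v =P u) => // vu'; rewrite vu' ltnn in lt.
Qed.

Lemma pairs_pV : pV setT = pairs n.
Proof. by apply/setP => e; rewrite /pV inE !in_setT /= andbT.
Qed.

Lemma adjC E x y : adj E x y = adj E y x.
Proof. by rewrite /adj orbC. Qed.

Lemma clus_sub_S V S E : E \subset pV V -> S :&: V = set0 -> clus E S \subset S.
Proof.
move=> sE SV0; apply/subsetP => y; rewrite inE => /exists_inP [x xS cxy].
apply: (closure_connect xS _ cxy) => a b aS; rewrite /adj => /orP [ab|ba].
- have := subsetP sE _ ab; rewrite !inE /= => /andP [_ /andP [aV _]].
  have : a \in S :&: V by rewrite inE aS aV.
  by rewrite SV0 inE.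
- have := subsetP sE _ ba; rewrite !inE /= => /andP [_ /andP [_ aV]].
  have : a \in S :&: V by rewrite inE aS aV.
  by rewrite SV0 inE.
Qed.

Lemma clus_step u V S E1 F : u \in S -> E1 \subset pV (V :\ u) -> F \subset star u V ->
  clus (E1 :|: F) S \subset u |: clus E1 (S :\ u :|: nbr u F).
Proof.
move=> uS sE1 sF.
have hE1 : forall e, e \in E1 -> (e.1 != u) && (e.2 != u).
  by move=> e /(subsetP sE1); rewrite !inE => /andP [_ /andP [/andP [-> _] /andP [-> _]]].
have hF : forall e, e \in F -> (e.1 == u) || (e.2 == u).
  by move=> e /(subsetP sF); rewrite !inE => /andP [_ ->].
apply/subsetP => y; rewrite inE => /exists_inP [x xS cxy].
apply: (closure_connect _ _ cxy).
  rewrite in_setU1; case: (x =P u) => //= /eqP xu.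
  rewrite inE; apply/exists_inP; exists x; last exact: connect0.
  by rewrite !inE xu xS.
move=> a b; case: (a =P u) => [-> _ | /eqP au].
  rewrite /adj => /orP [/setUP [ub|ub] | /setUP [bu|bu]].
  - by have := hE1 _ ub; rewrite /= eqxx.
  - rewrite in_setU1; apply/orP; right; rewrite inE; apply/exists_inP; exists b; last exact: connect0.
    by apply/setUP; right; rewrite inE ub.
  - by have := hE1 _ bu; rewrite /= eqxx andbF.
  - rewrite in_setU1; apply/orP; right; rewrite inE; apply/exists_inP; exists b; last exact: connect0.
    by apply/setUP; right; rewrite inE bu orbT.
rewrite in_setU1 (negbTE au) /= inE => /exists_inP [x' x'S cx'a].
rewrite /adj => /orP [/setUP [ab|ab] | /setUP [ba|ba]].
- rewrite in_setU1; apply/orP; right; rewrite inE; apply/exists_inP; exists x' => //.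
  by apply: (connect_trans cx'a); apply: connect1; rewrite /adj ab.
- have := hF _ ab; rewrite /= (negbTE au) /= => bu.
  by rewrite in_setU1 bu.
- rewrite in_setU1; apply/orP; right; rewrite inE; apply/exists_inP; exists x' => //.
  by apply: (connect_trans cx'a); apply: connect1; rewrite /adj ba orbT.
- have := hF _ ba; rewrite /= (negbTE au) orbF => bu.
  by rewrite in_setU1 bu.
Qed.

Lemma wt_split p u V E1 F : u \in V -> E1 \subset pV (V :\ u) -> F \subset star u V ->
  wt p V (E1 :|: F) = wt p (V :\ u) E1 * (p ^ #|F| * (1 - p) ^ (#|star u V| - #|F|)).
Proof.
move=> uV sE1 sF.
have d1 : E1 :&: F = set0.
  apply/disjoint_setI0; apply: (disjointWl sE1); apply: (disjointWr sF).
  exact: pV_star_disj.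
have d2 : pV (V :\ u) :&: star u V = set0 by apply/disjoint_setI0; exact: pV_star_disj.
have cE : #|E1 :|: F| = (#|E1| + #|F|)%N by rewrite cardsU d1 cards0 subn0.
have cP : #|pV V| = (#|pV (V :\ u)| + #|star u V|)%N by rewrite (pV_split u V uV) cardsU d2 cards0 subn0.
have l1 := subset_leq_card sE1; have l2 := subset_leq_card sF.
rewrite /wt cE cP.
have -> : ((#|pV (V :\ u)| + #|star u V|) - (#|E1| + #|F|) =
   (#|pV (V :\ u)| - #|E1|) + (#|star u V| - #|F|))%N by lia.
rewrite !pow_add; ring.
Qed.

Lemma wt_ge0 p V E : 0 <= p <= 1 -> 0 <= wt p V E.
Proof. move=> hp; rewrite /wt; apply: Rmult_le_pos; apply: pow_le; lra. Qed.

Lemma wt_sum1 p V : \big[Rplus/R0]_(E in powerset (pV V)) wt p V E = 1.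
Proof. by rewrite /wt sum_binom; replace (p + (1 - p)) with 1 by ring; apply: pow1. Qed.

Lemma key (p z w : R) : 0 <= p <= 1 -> 1 <= z -> z <= w -> z * (1 - p + p * w) ^ n <= w ->
  forall V S, \big[Rplus/R0]_(E in powerset (pV V)) (wt p V E * z ^ #|clus E S|) <= w ^ #|S|.
Proof.
move=> hp z1 zw hzw.
have w1 : 1 <= w by lra.
have base : forall V S, S :&: V = set0 ->
    \big[Rplus/R0]_(E in powerset (pV V)) (wt p V E * z ^ #|clus E S|) <= w ^ #|S|.
  move=> V S SV0.
  apply: (Rle_trans _ (\big[Rplus/R0]_(E in powerset (pV V)) (wt p V E * z ^ #|S|))).
    apply: sumR_le => E; rewrite powersetE => sE.
    apply: Rmult_le_compat_l; first exact: wt_ge0.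
    by apply: Rle_pow => //; apply/leP; apply: subset_leq_card; exact: (clus_sub_S V S E sE SV0).
  rewrite -big_distrl /= wt_sum1 Rmult_1_l.
  apply: pow_incr; lra.
move=> V S; move Hk: #|V| => k; elim: k V S Hk => [|k IH] V S Hk.
  case: (set_0Vmem (S :&: V)) => [SV0|[u]]; first exact: base.
  by rewrite inE => /andP [_ uV]; move: Hk; rewrite (cardsD1 u V) uV.
case: (set_0Vmem (S :&: V)) => [SV0|[u]]; first exact: base.
rewrite inE => /andP [uS uV].
have Hk' : #|V :\ u| = k by move: Hk; rewrite (cardsD1 u V) uV; case.
have cS : #|S| = (#|S :\ u|).+1 by rewrite (cardsD1 u S) uS.
pose q := fun F : {set 'I_n * 'I_n} => p ^ #|F| * (1 - p) ^ (#|star u V| - #|F|).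
have q0 : forall F, 0 <= q F by move=> F; rewrite /q; apply: Rmult_le_pos; apply: pow_le; lra.
pose S2 := fun F => S :\ u :|: nbr u F.
rewrite (pV_split u V uV) sum_powersetU; last exact: pV_star_disj.
apply: (Rle_trans _ (\big[Rplus/R0]_(E1 in powerset (pV (V :\ u)))
   \big[Rplus/R0]_(F in powerset (star u V)) ((q F * z) * (wt p (V :\ u) E1 * z ^ #|clus E1 (S2 F)|)))).
  apply: sumR_le => E1; rewrite powersetE => sE1; apply: sumR_le => F; rewrite powersetE => sF.
  rewrite (wt_split p u V E1 F uV sE1 sF) -/(q F).
  have hc : (#|clus (E1 :|: F) S| <= 1 + #|clus E1 (S2 F)|)%N.
    apply: (leq_trans (subset_leq_card (clus_step u V S E1 F uS sE1 sF))).
    by rewrite cardsU1; case: (_ \notin _).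
  apply: (Rle_trans _ (wt p (V :\ u) E1 * q F * z ^ (1 + #|clus E1 (S2 F)|))).
    apply: Rmult_le_compat_l.
      by apply: Rmult_le_pos; [exact: wt_ge0 | exact: q0].
    by apply: Rle_pow => //; apply/leP.
  rewrite pow_add pow_1; apply: Req_le; ring.
rewrite exchange_big /=.
apply: (Rle_trans _ (\big[Rplus/R0]_(F in powerset (star u V)) ((q F * z) * (w ^ #|S :\ u| * w ^ #|F|)))).
  apply: sumR_le => F; rewrite powersetE => sF.
  rewrite -sumR_mull; apply: Rmult_le_compat_l.
    by apply: Rmult_le_pos; [exact: q0 | lra].
  apply: (Rle_trans _ _ _ (IH (V :\ u) (S2 F) Hk')).
  rewrite -pow_add; apply: Rle_pow => //; apply/leP.
  rewrite /S2 cardsU; apply: (leq_trans (leq_subr _ _)).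
  by rewrite leq_add2l; exact: (nbr_card u V F sF).
have -> : \big[Rplus/R0]_(F in powerset (star u V)) ((q F * z) * (w ^ #|S :\ u| * w ^ #|F|)) =
   (z * w ^ #|S :\ u|) * \big[Rplus/R0]_(F in powerset (star u V))
      ((p * w) ^ #|F| * (1 - p) ^ (#|star u V| - #|F|)).
  rewrite sumR_mull; apply: eq_bigr => F _; rewrite /q Rpow_mult_distr; ring.
rewrite sum_binom cS /=.
have hb : 1 <= p * w + (1 - p) by nra.
have hs := star_card u V.
apply: (Rle_trans _ ((z * w ^ #|S :\ u|) * (p * w + (1 - p)) ^ n)).
  apply: Rmult_le_compat_l.
    by apply: Rmult_le_pos; [lra | apply: pow_le; lra].
  by apply: Rle_pow => //; apply/leP.
replace (p * w + (1 - p)) with (1 - p + p * w) by ring.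
have hW := pow_le w #|S :\ u| ltac:(lra).
replace (z * w ^ #|S :\ u| * (1 - p + p * w) ^ n) with (w ^ #|S :\ u| * (z * (1 - p + p * w) ^ n)) by ring.
rewrite (Rmult_comm w); exact: Rmult_le_compat_l.
Qed.

Definition reps M E : {set 'I_n} :=
  [set x | (x \in S_M M E) && [forall y, (y \in cluster E x) ==> (x <= y)%N]].

Lemma csym E : connect_sym (adj E).
Proof. by apply: sym_connect_sym => x y; exact: adjC. Qed.

Lemma cluster_eq E x y : connect (adj E) x y -> cluster E x = cluster E y.
Proof.
move=> cxy; apply/setP => v; rewrite !inE; apply/idP/idP => h.
  by apply: connect_trans h; rewrite csym.
exact: connect_trans cxy h.
Qed.
Arguments cluster_eq {E x y}.

Lemma SM_sub_clus M E : S_M M E \subset clus E (reps M E).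
Proof.
apply/subsetP => y yS.
case: (@arg_minnP _ y (connect (adj E) y) (fun x => nat_of_ord x) (connect0 _ y)) => r cyr rmin.
rewrite inE; apply/exists_inP; exists r; last by rewrite csym.
rewrite inE; apply/andP; split.
  by move: yS; rewrite !inE (cluster_eq cyr).
apply/forallP => v; apply/implyP; rewrite inE => crv.
by apply: rmin; apply: connect_trans crv.
Qed.

Lemma reps_card M E : (M.+1 * #|reps M E| <= #|S_M M E|)%N.
Proof.
pose P := [set cluster E x | x in reps M E].
have hrep : forall x v, x \in reps M E -> v \in cluster E x -> (x <= v)%N.
  by move=> x v; rewrite inE => /andP [_ /forallP /(_ v) /implyP].
have inj : {in reps M E &, injective (cluster E)}.
  move=> x1 x2 r1 r2 eq; apply: val_inj; apply/eqP; rewrite eqn_leq.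
  apply/andP; split.
    by apply: hrep r1 _; rewrite eq inE connect0.
  by apply: hrep r2 _; rewrite -eq inE connect0.
have cP : #|P| = #|reps M E| by rewrite card_in_imset.
have tP : trivIset P.
  apply/trivIsetP => A B /imsetP [x1 r1 ->] /imsetP [x2 r2 ->] neq.
  rewrite -setI_eq0; apply/eqP/setP => v; rewrite !inE; apply/negbTE/negP => /andP [h1 h2].
  move/negP: neq; apply; apply/eqP; apply: cluster_eq.
  by apply: connect_trans h1 _; rewrite csym.
have cov : cover P \subset S_M M E.
  apply/subsetP => v /bigcupP [A /imsetP [x r ->]]; rewrite inE => cxv.
  move: r; rewrite !inE => /andP [xS _].
  by rewrite -(cluster_eq cxv).
have /eqP sumP := tP.
apply: (leq_trans _ (subset_leq_card cov)); rewrite -sumP -cP mulnC -sum_nat_const.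
apply: leq_sum => A /imsetP [x r ->].
by move: r; rewrite !inE => /andP [].
Qed.
End Graph.

Lemma exp_le' a b : a <= b -> exp a <= exp b.
Proof. move=> h; case: (Rle_lt_or_eq_dec _ _ h) => [lt|->]; [left; exact: exp_increasing | lra]. Qed.

Lemma exp_pow' x k : exp x ^ k = exp (x * INR k).
Proof.
elim: k => [|k IH]; first by rewrite /= Rmult_0_r exp_0.
have -> : exp x ^ k.+1 = exp x * exp x ^ k by [].
by rewrite IH S_INR -exp_plus; congr exp; ring.
Qed.

Lemma pow_le_exp x k : 0 <= x -> (1 + x) ^ k <= exp (x * INR k).
Proof.
move=> x0; rewrite -exp_pow'; apply: pow_incr; split; [lra | exact: exp_ineq1_le].
Qed.

Lemma single_le_sum (I : finType) (P : pred I) (F : I -> R) i :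
  P i -> (forall j, P j -> 0 <= F j) -> F i <= \big[Rplus/R0]_(j | P j) F j.
Proof.
move=> Pi h; rewrite (bigD1 i) //=.
have := @sumR_ge0 I (fun j => P j && (j != i)) F (fun j hj => h j (proj1 (andP hj))).
lra.
Qed.

Lemma card0_I0 (X : {set 'I_0 * 'I_0}) : #|X| = 0%N.
Proof. by apply: eq_card0 => [[[i hi] j]]; exfalso; move: hi; rewrite ltn0. Qed.

Lemma bound n (p w a rho : R) (M : nat) :
  0 <= p <= 1 -> 0 < a -> exp a <= w -> exp a * (1 - p + p * w) ^ n <= w -> 0 < rho ->
  exp (- (a / 2 * INR M.+1)) * w <= a * rho / 4 ->
  @ER_prob n p (fun E => Rleb (rho * INR n) (INR #|S_M M E|)) <= 1 * exp (- (a / 4 * rho * INR n)).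
Proof.
move=> hp a0 zw hzw rho0 htt.
set z := exp a; set tt := exp (- (a / 2 * INR M.+1)).
have z1 : 1 <= z by rewrite /z -exp_0; apply: exp_le'; lra.
have w0 : 0 <= w by have := exp_pos a; lra.
rewrite -/z in zw hzw.
have tt0 : 0 <= tt by rewrite /tt; left; exact: exp_pos.
set K := exp (- (a * rho * INR n / 2)).
have K0 : 0 <= K by rewrite /K; left; exact: exp_pos.
pose g := fun (E : {set 'I_n * 'I_n}) (S : {set 'I_n}) => tt ^ #|S| * z ^ #|clus n E S|.
have g0 : forall E S, 0 <= g E S by move=> E S; apply: Rmult_le_pos; apply: pow_le; lra.
have ew : forall E, ER_weight p E = wt n p setT E by move=> E; rewrite /ER_weight /wt pairs_pV.
rewrite /ER_prob -pairs_pV.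
have step1 : forall E, Rleb (rho * INR n) (INR #|S_M M E|) -> 1 <= K * g E (reps n M E).
  move=> E; rewrite /Rleb; case: Rle_dec => // hm _.
  have hmm' : INR #|S_M M E| <= INR #|clus n E (reps n M E)| by apply: le_INR; apply/leP; apply: subset_leq_card; exact: SM_sub_clus.
  have hK : INR M.+1 * INR #|reps n M E| <= INR #|S_M M E| by rewrite -mult_INR; apply: le_INR; apply/leP; exact: reps_card.
  rewrite /K /g /tt /z !exp_pow' -!exp_plus -exp_0; apply: exp_le'.
  have h1 := Rmult_le_compat_l _ _ _ (Rlt_le _ _ a0) hm.
  have h2 := Rmult_le_compat_l _ _ _ (Rlt_le _ _ a0) hK.
  have h3 := Rmult_le_compat_l _ _ _ (Rlt_le _ _ a0) hmm'.
  lra.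
apply: (Rle_trans _ (\big[Rplus/R0]_(E in powerset (pV n setT))
      (wt n p setT E * (K * \big[Rplus/R0]_(S in powerset setT) g E S)))).
  apply: (Rle_trans _ (\big[Rplus/R0]_(E in powerset (pV n setT) | Rleb (rho * INR n) (INR #|S_M M E|))
      (wt n p setT E * (K * \big[Rplus/R0]_(S in powerset setT) g E S)))).
    apply: sumR_le => E /andP [_ hA]; rewrite ew.
    rewrite -{1}(Rmult_1_r (wt n p setT E)); apply: Rmult_le_compat_l; first exact: wt_ge0.
    apply: (Rle_trans _ _ _ (step1 E hA)); apply: Rmult_le_compat_l => //.
    apply: (@single_le_sum _ (fun S => S \in powerset setT) (g E)) => //.
    by rewrite powersetE subsetT.
  apply: sumR_sub => E _; apply: Rmult_le_pos; first exact: wt_ge0.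
  by apply: Rmult_le_pos => //; apply: sumR_ge0.
apply: (Rle_trans _ (K * \big[Rplus/R0]_(S in powerset [set: 'I_n]) (tt ^ #|S| *
     \big[Rplus/R0]_(E in powerset (pV n setT)) (wt n p setT E * z ^ #|clus n E S|)))).
  apply: Req_le; rewrite sumR_mull.
  rewrite (eq_bigr (fun E => \big[Rplus/R0]_(S in powerset [set: 'I_n]) (K * (tt ^ #|S| * (wt n p setT E * z ^ #|clus n E S|))))); last first.
    by move=> E _; rewrite sumR_mull sumR_mull; apply: eq_bigr => S _; rewrite /g; ring.
  rewrite exchange_big /=; apply: eq_bigr => S _; rewrite sumR_mull sumR_mull; apply: eq_bigr => E _; ring.
apply: (Rle_trans _ (K * \big[Rplus/R0]_(S in powerset [set: 'I_n]) ((tt * w) ^ #|S| * 1 ^ (#|[set: 'I_n]| - #|S|)))).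
  apply: Rmult_le_compat_l => //; apply: sumR_le => S _.
  rewrite pow1 Rmult_1_r Rpow_mult_distr; apply: Rmult_le_compat_l; first exact: pow_le.
  apply: key => //; lra.
rewrite sum_binom cardsT card_ord.
apply: (Rle_trans _ (K * exp (tt * w * INR n))).
  apply: Rmult_le_compat_l => //; rewrite Rplus_comm; apply: pow_le_exp.
  exact: Rmult_le_pos.
rewrite /K -exp_plus Rmult_1_l; apply: exp_le'.
rewrite -/tt in htt.
have := Rmult_le_compat_r (INR n) _ _ (pos_INR n) htt; lra.
Qed.

Theorem mainTheorem3 :
  forall lambda : R, 0 < lambda < 1 ->
  exists c : R, 0 < c /\
  forall rho : R, 0 < rho ->
  exists M0 : nat, forall M : nat, leq M0 M ->
  exists C : R, forall n : nat,
    @ER_prob n (lambda / INR n)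
       (fun E => Rleb (rho * INR n) (INR #|S_M M E|))
     <= C * exp (- (c * rho * INR n)).
Proof.
move=> l [l0 l1].
pose t := (1 - l) / 2.
have t0 : 0 < t by rewrite /t; lra.
pose w := 1 + t.
pose z0 := (1 + t) * (1 - l * t).
have lt0 : 0 < l * t by nra.
have lt1 : l * t < 1 - l by rewrite /t; nra.
have z0gt : 1 < z0 by rewrite /z0; nra.
pose a := ln z0.
have a0 : 0 < a by rewrite /a -ln_1; apply: ln_increasing; lra.
have ea : exp a = z0 by rewrite /a exp_ln //; lra.
have z0w : z0 <= w by rewrite /z0 /w; nra.
exists (a / 4); split; first lra.
move=> rho rho0.
have w0 : 0 < w by rewrite /w; lra.
have eps0 : 0 < a * a * rho / (8 * w).
  apply: Rdiv_lt_0_compat; [apply: Rmult_lt_0_compat => //; exact: Rmult_lt_0_compat | lra].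
have [N [hN N0]] := archimed_cor1 _ eps0.
exists N => M hM; exists 1 => n.
have htt : exp (- (a / 2 * INR M.+1)) * w <= a * rho / 4.
  have hMN : INR N <= INR M.+1 by apply: le_INR; apply/leP; exact: leqW.
  have INpos : 0 < INR N by apply: lt_0_INR.
  have IMpos : 0 < INR M.+1 by lra.
  have x0 : 0 < a / 2 * INR M.+1 by apply: Rmult_lt_0_compat => //; lra.
  have ex : exp (- (a / 2 * INR M.+1)) <= / (a / 2 * INR M.+1).
    rewrite exp_Ropp; apply: Rinv_le_contravar => //.
    have := exp_ineq1_le (a / 2 * INR M.+1); lra.
  have hinv : / INR M.+1 <= / INR N by apply: Rinv_le_contravar.
  have e1 : / (a / 2 * INR M.+1) = 2 / a * / INR M.+1 by field; lra.
  have e2 : a * rho / 4 = 2 / a * (a * a * rho / (8 * w)) * w by field; lra.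
  rewrite e2; apply: Rmult_le_compat_r; first lra.
  apply: (Rle_trans _ _ _ ex); rewrite e1; apply: Rmult_le_compat_l.
    by apply: Rlt_le; apply: Rdiv_lt_0_compat; lra.
  lra.
case: n => [|n'].
  rewrite (_ : @ER_prob 0 (l / INR 0) _ = @ER_prob 0 0 (fun E => Rleb (rho * INR 0) (INR #|S_M M E|))); last first.
    by apply: eq_bigr => E _; rewrite /ER_weight !card0_I0.
  apply: (bound _ _ w a) => //; try lra.
set n := n'.+1.
have In1 : 1 <= INR n by rewrite /n S_INR; have := pos_INR n'; lra.
set p := l / INR n.
have pn : p * INR n = l by rewrite /p; field; lra.
have p0 : 0 < p by rewrite /p; apply: Rdiv_lt_0_compat; lra.
have p1 : p <= 1.
  rewrite /p; apply: (Rmult_le_reg_r (INR n)); first lra.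
  rewrite -/p pn; lra.
apply: (bound _ _ w a) => //; try lra.
rewrite ea.
have e3 : 1 - p + p * w = 1 + p * t by rewrite /w; ring.
rewrite e3.
apply: (Rle_trans _ (z0 * exp (p * t * INR n))).
  apply: Rmult_le_compat_l; first lra.
  by apply: pow_le_exp; nra.
have -> : p * t * INR n = l * t by rewrite -pn; ring.
have hE := exp_ineq1_le (- (l * t)).
have hE2 : exp (l * t) * exp (- (l * t)) = 1 by rewrite -exp_plus Rplus_opp_r exp_0.
have hE3 : 0 < exp (l * t) := exp_pos _.
have h4 : exp (l * t) * (1 - l * t) <= 1.
  have := Rmult_le_compat_l _ _ _ (Rlt_le _ _ hE3) hE; lra.
rewrite /z0 /w.
replace ((1 + t) * (1 - l * t) * exp (l * t)) with ((1 + t) * (exp (l * t) * (1 - l * t))) by ring.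
rewrite -{2}(Rmult_1_r (1 + t)); apply: Rmult_le_compat_l; lra.
Qed.
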